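(* Any circuit on $n$ qubits composed entirely of controlled-not gates computes an operator that can be embedded, using $O(n^2)$ ancillae, in a quantum circuit of depth $O(\log n)$ (with absolute implied constants). Consequently, any family $(C_n)_{n\ge1}$ of such circuits, $C_n$ acting on $n$ qubits, defines a family of operators belonging to $\mathbf{QNC}^1$.
   Context: Qubits have computational basis $|0\rangle,|1\rangle$. The controlled-not gate on (control, target) is the two-qubit unitary $|a,b\rangle\mapsto|a,a\oplus b\rangle$. A circuit composed of controlled-not gates is any finite product of such gates applied to pairs of the $n$ qubits. A one-layer circuit is a tensor product of arbitrary one-qubit and two-qubit unitary gates acting on pairwise disjoint sets of qubits; a quantum circuit of depth $d$ is a product of $d$ one-layer circuits. An operator $F$ on $n$ qubits is embedded in an operator $M$ on $n+m$ qubits using $m$ ancillae if $M(|\psi\rangle\otimes|0\cdots0\rangle)=(F|\psi\rangle)\otimes|0\cdots0\rangle$ for all $|\psi\rangle$. A family $F=(F(n))_{n\ge1}$, $F(n)$ a unitary on $n$ qubits, is in $\mathbf{QNC}^1$ if there are constants $c_1,c_2,j$ such that for all $n$, $F(n)$ can be embedded in a quantum circuit of depth at most $c_1\log n$ using at most $c_2n^j$ ancillae. *)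

(* Defs.v *)
From HB Require Import structures.
From mathcomp Require Import all_boot all_order all_algebra.
Set Implicit Arguments. Unset Strict Implicit. Unset Printing Implicit Defensive.
Import GRing.Theory Num.Theory.
Local Open Scope ring_scope.

Section Quantum.
Variable C : numClosedFieldType.

Definition basis (n : nat) := {ffun 'I_n -> bool}.

(* an operator on a finite-dimensional space with basis T, given by its
   matrix entries  A x y = <x|A|y> *)
Definition opT (T : finType) := T -> T -> C.
Definition op (n : nat) := opT (basis n).

Definition opT_id (T : finType) : opT T := fun x y => (x == y)%:R.
Definition opT_mul (T : finType) (A B : opT T) : opT T :=
  fun x z => \sum_(y : T) A x y * B y z.
Definition opT_adj (T : finType) (A : opT T) : opT T := fun x y => (A y x)^*.
Definition unitaryT (T : finType) (A : opT T) : Prop :=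
  (forall x y, opT_mul A (opT_adj A) x y = opT_id x y) /\
  (forall x y, opT_mul (opT_adj A) A x y = opT_id x y).

Definition apply (T : finType) (A : opT T) (v : T -> C) : T -> C :=
  fun x => \sum_(y : T) A x y * v y.

Inductive gate (n : nat) :=
| G1 of 'I_n & opT bool
| G2 of 'I_n & 'I_n & opT (bool * bool)%type.

Definition gate_wf n (g : gate n) : Prop :=
  match g with
  | G1 _ U => unitaryT U
  | G2 i j U => i <> j /\ unitaryT U
  end.

Definition gate_supp n (g : gate n) : {set 'I_n} :=
  match g with
  | G1 i _ => [set i]
  | G2 i j _ => [set i; j]
  end.

Definition gate_entry n (g : gate n) (x y : basis n) : C :=
  match g with
  | G1 i U => U (x i) (y i)
  | G2 i j U => U (x i, x j) (y i, y j)
  end.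

Definition layer n := seq (gate n).

Definition layer_wf n (L : layer n) : Prop :=
  foldr (fun g P => gate_wf g /\ P) True L /\
  pairwise (fun g h => [disjoint gate_supp g & gate_supp h]) L.

Definition layer_supp n (L : layer n) : {set 'I_n} :=
  \bigcup_(g <- L) gate_supp g.

(* the tensor product of the gates, identity on the remaining qubits *)
Definition layer_op n (L : layer n) : op n :=
  fun x y => (\prod_(g <- L) gate_entry g x y) *
             ([forall k, (k \notin layer_supp L) ==> (x k == y k)])%:R.

(* a circuit: list of layers, the head being applied first; depth = size *)
Definition circuit n := seq (layer n).

Definition circuit_wf n (ls : circuit n) : Prop := foldr (fun L P => layer_wf L /\ P) True ls.

Fixpoint circuit_op n (ls : circuit n) : op n :=
  match ls with
  | [::] => @opT_id _
  | L :: ls' => opT_mul (circuit_op ls') (layer_op L)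
  end.

(* |psi> (x) |0...0> on n + m qubits (ancillae are the last m qubits) *)
Definition pad n m (v : basis n -> C) : basis (n + m) -> C :=
  fun z => if [forall k : 'I_m, ~~ z (rshift n k)]
           then v [ffun i => z (lshift m i)] else 0.

Definition embeds n m (F : op n) (M : op (n + m)) : Prop :=
  forall (v : basis n -> C) (z : basis (n + m)),
    apply M (@pad n m v) z = @pad n m (apply F v) z.

Definition cnot_map n (c t : 'I_n) (y : basis n) : basis n :=
  [ffun k => if k == t then addb (y c) (y t) else y k].

Definition cnot_op n (c t : 'I_n) : op n :=
  fun x y => (x == cnot_map c t y)%:R.

(* a CNOT circuit: list of (control, target) pairs, head applied first *)
Definition cnot_circuit n := seq ('I_n * 'I_n)%type.

Definition cnot_wf n (s : cnot_circuit n) : bool := all (fun p => p.1 != p.2) s.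

Fixpoint cnot_circuit_op n (s : cnot_circuit n) : op n :=
  match s with
  | [::] => @opT_id _
  | p :: s' => opT_mul (cnot_circuit_op s') (cnot_op p.1 p.2)
  end.

(* depth <= c1 * log n is expressed with the integer log trunc_log 2 n;
   for n >= 1 this is equivalent (up to the constant) to c1 * log n. *)
Definition in_QNC1 (F : forall n : nat, op n) : Prop :=
  (forall n, (0 < n)%N -> unitaryT (F n)) /\
  exists c1 c2 j : nat, forall n : nat, (0 < n)%N ->
    exists m : nat, (m <= c2 * n ^ j)%N /\
      exists ls : circuit (n + m),
        circuit_wf ls /\ (size ls <= c1 * trunc_log 2 n)%N /\
        embeds (F n) (circuit_op ls).

End Quantum.

(* Main.v *)
Require Import Defs.
From mathcomp Require Import all_boot all_order all_algebra zify.
From Stdlib Require Import FunctionalExtensionality.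
Set Implicit Arguments. Unset Strict Implicit. Unset Printing Implicit Defensive.
Import GRing.Theory Num.Theory.

Section Classical.
Variable Q : finType.
Definition srcT := Q -> option Q.
Definition step (s : srcT) (y : {ffun Q -> bool}) : {ffun Q -> bool} :=
  [ffun q => if s q is Some c then y q (+) y c else y q].
Definition valid (s : srcT) := forall t c, s t = Some c -> c != t /\ s c = None.
Definition sinj (s : srcT) := forall t t' c, s t = Some c -> s t' = Some c -> t = t'.
Definition good s := valid s /\ sinj s.
Definition run (ss : seq srcT) y := foldl (fun y s => step s y) y ss.
Fixpoint allS (P : srcT -> Prop) (ss : seq srcT) : Prop :=
  if ss is s :: ss' then P s /\ allS P ss' else True.

Lemma allS_cat P s1 s2 : allS P s1 -> allS P s2 -> allS P (s1 ++ s2).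
Proof. by elim: s1 => //= s s1 IH [H1 H2] H; split => //; exact: IH. Qed.
Lemma allS_rev P s : allS P s -> allS P (rev s).
Proof.
elim: s => //= s s1 IH [] H1 /IH H2; rewrite rev_cons -cats1.
by apply: allS_cat.
Qed.

Lemma stepK s : valid s -> involutive (step s).
Proof.
move=> V y; apply/ffunP=> q; rewrite !ffunE.
case E: (s q) => [c|] //; have [_ Ec] := V _ _ E.
by rewrite ffunE Ec -addbA addbb addbF.
Qed.

Lemma run_cons s ss y : run (s :: ss) y = run ss (step s y). Proof. by []. Qed.
Lemma run_cat s1 s2 y : run (s1 ++ s2) y = run s2 (run s1 y).
Proof. by rewrite /run foldl_cat. Qed.
Lemma run_rcons ss s y : run (rcons ss s) y = step s (run ss y).
Proof. by rewrite /run foldl_rcons. Qed.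

Lemma runK ss (y : {ffun Q -> bool}) : allS good ss -> run (rev ss) (run ss y) = y.
Proof.
elim: ss y => //= s ss IH y [[V _] H].
by rewrite rev_cons run_rcons IH // stepK.
Qed.

Definition avoids (D : pred Q) (s : srcT) :=
  forall t c, s t = Some c -> ~~ D t /\ ~~ D c.

Lemma run_avoidsD D ss (y : {ffun Q -> bool}) q : allS (avoids D) ss -> D q -> run ss y q = y q.
Proof.
elim: ss y => //= s ss IH y [A H] Dq; rewrite IH // ffunE.
case E: (s q) => [c|] //; have [] := A _ _ E; by rewrite Dq.
Qed.

Lemma run_avoidsN D ss (y1 y2 : {ffun Q -> bool}) : allS (avoids D) ss ->
  (forall q, ~~ D q -> y1 q = y2 q) -> forall q, ~~ D q -> run ss y1 q = run ss y2 q.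
Proof.
elim: ss y1 y2 => //= s ss IH y1 y2 [A H] E; apply: IH => // q Dq.
rewrite !ffunE; case E1: (s q) => [c|]; last exact: E.
have [_ Dc] := A _ _ E1; by rewrite !E.
Qed.

Lemma P_spec D ss cp (y : {ffun Q -> bool}) q : allS good ss -> allS (avoids D) ss ->
  (forall t c, cp t = Some c -> D t) ->
  run (ss ++ cp :: rev ss) y q = if D q then step cp (run ss y) q else y q.
Proof.
move=> G A Dcp; rewrite run_cat run_cons.
case: ifP => Dq.
  by rewrite (@run_avoidsD D (rev ss) _ q (allS_rev A) Dq).
rewrite (@run_avoidsN D (rev ss) _ (run ss y) (allS_rev A)) ?Dq ?runK //.
move=> q' Dq'; rewrite ffunE; case E: (cp q') => [c|] //.
by move: (Dcp _ _ E); rewrite (negbTE Dq').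
Qed.
End Classical.

Section QBridge.
Variable C : numClosedFieldType.
Local Open Scope ring_scope.

Definition permop (T : finType) (f : T -> T) : opT C T := fun x y => (x == f y)%:R.

Lemma sum_delta (T : finType) (a : T) (F : T -> C) : \sum_y (y == a)%:R * F y = F a.
Proof.
rewrite (bigD1 a) //= eqxx mul1r big1 ?addr0 // => y /negbTE ->; by rewrite mul0r.
Qed.

Lemma sum_delta' (T : finType) (a : T) (F : T -> C) : \sum_y F y * (y == a)%:R = F a.
Proof. under eq_bigr => y _ do rewrite mulrC. exact: sum_delta. Qed.

Lemma permop_mul (T : finType) (f g : T -> T) x y :
  opT_mul (permop f) (permop g) x y = permop (f \o g) x y.
Proof.
rewrite /opT_mul /permop; under eq_bigr => z _ do rewrite mulrC.
exact: sum_delta.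
Qed.

Lemma permop_unitary (T : finType) (f : T -> T) : bijective f -> unitaryT (permop f).
Proof.
case=> g fg gf; split => x y; rewrite /opT_mul /opT_adj /permop /opT_id.
  under eq_bigr => z _ do rewrite conjC_nat.
  have E z : (x == f z) = (z == g x).
    by apply/eqP/eqP => [->|->]; rewrite ?fg ?gf.
  under eq_bigr => z _ do rewrite E.
  by rewrite sum_delta gf eq_sym.
under eq_bigr => z _ do rewrite conjC_nat.
by rewrite sum_delta (inj_eq (can_inj fg)).
Qed.

Definition cnotU : opT C (bool * bool)%type := fun a b => (a == (b.1, b.1 (+) b.2))%:R.

Lemma cnotU_unitary : unitaryT cnotU.
Proof.
have -> : cnotU = permop (fun b : bool * bool => (b.1, b.1 (+) b.2)) by [].
apply: permop_unitary; exists (fun b : bool * bool => (b.1, b.1 (+) b.2));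
  by case=> [[] []].
Qed.

Definition mklayer K (s : srcT 'I_K) : layer C K :=
  pmap (fun t => omap (fun c => G2 c t cnotU) (s t)) (enum 'I_K).

Lemma supp_mk K (s : srcT 'I_K) k :
  (k \in layer_supp (mklayer s)) =
  has (fun t => if s t is Some c then k \in [set c; t] else false) (enum 'I_K).
Proof.
rewrite /layer_supp /mklayer; elim: (enum 'I_K) => [|t r IH] /=.
  by rewrite big_nil inE.
by case: (s t) => [c|] //=; rewrite big_cons in_setU IH.
Qed.

Lemma layer_op_mk K (s : srcT 'I_K) x y : good s ->
  layer_op (mklayer s) x y = (x == step s y)%:R.
Proof.
move=> [V I]; rewrite /layer_op /mklayer big_pmap.
have -> : \prod_(j <- enum 'I_K) oapp (fun g => gate_entry g x y) 1
             (omap (fun c => G2 c j cnotU) (s j)) =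
          (all (fun t => if s t is Some c then ((x c, x t) == (y c, y c (+) y t))
                         else true) (enum 'I_K))%:R.
  elim: (enum 'I_K) => [|t r IH] /=; first by rewrite big_nil.
  rewrite big_cons IH; case: (s t) => [c|] /=; last by rewrite mul1r.
  by rewrite /cnotU /=; case: (_ == _); rewrite ?mul1r ?mul0r.
rewrite -natrM mulnb; congr (nat_of_bool _)%:R; apply/idP/idP.
  case/andP=> /allP H1 /forallP H2; apply/eqP/ffunP => k; rewrite ffunE.
  case Ek: (s k) => [c|].
    by move: (H1 k (mem_enum _ k)); rewrite Ek xpair_eqE => /andP[_ /eqP->]; rewrite addbC.
  case: (pickP (fun t => s t == Some k)) => [t /eqP Et|N].
    by move: (H1 t (mem_enum _ t)); rewrite Et xpair_eqE => /andP[/eqP-> _].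
  apply/eqP; move: (H2 k); rewrite supp_mk; move/implyP; apply; apply/hasPn => t _.
  case Et: (s t) => [c|] //; rewrite !inE; apply/negP => /orP[/eqP E|/eqP E].
    by move: (N t); rewrite Et E eqxx.
  by rewrite -E Ek in Et.
move/eqP=> ->; apply/andP; split.
  apply/allP => t _; case Et: (s t) => [c|] //; rewrite !ffunE Et.
  by have [_ ->] := V _ _ Et; rewrite addbC.
apply/forallP => k; apply/implyP; rewrite supp_mk ffunE.
case Ek: (s k) => [c|] // /hasPn H; have := H k (mem_enum _ k).
by rewrite Ek !inE eqxx orbT.
Qed.

Lemma layer_wf_mk K (s : srcT 'I_K) : good s -> layer_wf (mklayer s).
Proof.
move=> [V I]; split.
  rewrite /mklayer; elim: (enum 'I_K) => //= t r IH.
  case Et: (s t) => [c|] //=; split => //; split; last exact: cnotU_unitary.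
  by have [/eqP ? _] := V _ _ Et.
have key : forall r : seq 'I_K, uniq r ->
  pairwise (fun g h : gate C K => [disjoint gate_supp g & gate_supp h])
   (pmap (fun t => omap (fun c => G2 c t cnotU) (s t)) r).
  elim=> //= t r IH /andP[tr ur].
  case Et: (s t) => [c|] /=; last exact: IH.
  rewrite IH // andbT all_pmap; apply/allP => t' t'r /=.
  case Et': (s t') => [c'|] //=.
  have tt' : t != t' by apply: contraNneq tr => ->.
  have [ct sc] := V _ _ Et; have [ct' sc'] := V _ _ Et'.
  apply/pred0P => k /=; rewrite !inE; apply/negP => /andP[/orP[]/eqP-> /orP[]/eqP E].
  - by rewrite -E in Et'; move: tt'; rewrite (I _ _ _ Et Et') eqxx.
  - by rewrite E Et' in sc.
  - by rewrite -E Et in sc'.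
  - by move: tt'; rewrite E eqxx.
exact: key (enum_uniq _).
Qed.

Lemma circuit_mk K (ss : seq (srcT 'I_K)) (x y : basis K) : allS (@good _) ss ->
  circuit_op (map (@mklayer K) ss) x y = (x == run ss y)%:R.
Proof.
elim: ss x y => [|s ss IH] x y //= [G H].
rewrite /opT_mul; under eq_bigr => z _ do rewrite IH // layer_op_mk // mulrC.
exact: sum_delta.
Qed.

Lemma circuit_wf_mk K (ss : seq (srcT 'I_K)) : allS (@good _) ss ->
  circuit_wf (map (@mklayer K) ss).
Proof. by elim: ss => //= s ss IH [G H]; split; [apply: layer_wf_mk|apply: IH]. Qed.

Definition joinK n m (w : basis n) : basis (n + m) :=
  [ffun k => if split k is inl j then w j else false].

Lemma split_l n m (i : 'I_n) : split (lshift m i) = inl i.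
Proof. exact: (unsplitK (inl i)). Qed.
Lemma split_r n m (i : 'I_m) : split (rshift n i) = inr i.
Proof. exact: (unsplitK (inr i)). Qed.

Lemma pad_sum n m (u : basis n -> C) z :
  @pad C n m u z = \sum_w (z == joinK m w)%:R * u w.
Proof.
rewrite /pad; case: ifP => H.
  have E w : (z == joinK m w) = (w == [ffun i => z (lshift m i)]).
    apply/eqP/eqP => [->|->].
      by apply/ffunP => i; rewrite !ffunE split_l.
    apply/ffunP => k; rewrite -(splitK k); case: (split k) => j /=; rewrite !ffunE.
      by rewrite split_l ffunE.
    by rewrite split_r; move/forallP: H => /(_ j) /negbTE.
  under eq_bigr => w _ do rewrite E.
  by rewrite sum_delta.
rewrite big1 // => w _; case: eqP => [E|]; last by rewrite mul0r.
by move: H; rewrite E; have -> // : [forall k, ~~ joinK m w (rshift n k)];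
  apply/forallP => k; rewrite ffunE split_r.
Qed.

Lemma embeds_perm n m (f : basis n -> basis n) (F : basis (n + m) -> basis (n + m)) :
  (forall w, F (joinK m w) = joinK m (f w)) -> embeds (permop f) (permop F).
Proof.
move=> HF v z; rewrite /apply /permop pad_sum.
under eq_bigr => y _ do rewrite pad_sum mulr_sumr.
rewrite exchange_big /=.
under eq_bigr => w _ do under eq_bigr => y _ do
  rewrite mulrCA mulrA -[(y == _)%:R * _]mulrC.
under eq_bigr => w _ do rewrite -mulr_suml.
under eq_bigr => w _ do rewrite sum_delta' HF.
under [RHS]eq_bigr => w' _ do rewrite mulr_sumr.
rewrite [RHS]exchange_big /=; apply: eq_bigr => w _.
under eq_bigr => w' _ do rewrite mulrCA mulrA -[(w' == _)%:R * _]mulrC.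
by rewrite -mulr_suml sum_delta'.
Qed.
End QBridge.

Section CnotSem.
Variable n : nat.
Definition xorv (a b : basis n) : basis n := [ffun i => a i (+) b i].
Definition zv : basis n := [ffun _ => false].
Definition ev (j : 'I_n) : basis n := [ffun k => k == j].
Definition lin (g : basis n -> basis n) := forall a b, g (xorv a b) = xorv (g a) (g b).

Fixpoint fc (s : cnot_circuit n) (y : basis n) : basis n :=
  if s is p :: s' then fc s' (cnot_map p.1 p.2 y) else y.

Lemma cnot_op_perm (C : numClosedFieldType) s x y :
  cnot_circuit_op C s x y = permop C (fc s) x y.
Proof.
elim: s x y => [|p s IH] x y //=.
rewrite /opT_mul; under eq_bigr => z _ do rewrite IH.
exact: sum_delta'.
Qed.

Lemma cnot_lin (c t : 'I_n) : lin (cnot_map c t).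
Proof.
move=> a b; apply/ffunP => k; rewrite !ffunE.
by case: ifP => _; rewrite ?ffunE // addbACA.
Qed.

Lemma fc_lin s : lin (fc s).
Proof.
elim: s => [|p s IH] //= a b; by rewrite cnot_lin IH.
Qed.

Lemma fc_inj s : cnot_wf s -> injective (fc s).
Proof.
elim: s => [|[c t] s IH] /=; first by move=> _ ? ? ->.
move=> /andP [ct ws].
apply: inj_comp; first exact: IH.
apply: (can_inj (g := cnot_map c t)) => y; apply/ffunP => k; rewrite !ffunE.
case: ifP => [/eqP->|H]; rewrite ?ffunE ?H //.
by rewrite (negbTE ct) eqxx addbA addbb.
Qed.

Lemma lin0 g : lin g -> g zv = zv.
Proof.
move=> L; have E : xorv zv zv = zv by apply/ffunP => k; rewrite !ffunE.
apply/ffunP => k; have := congr1 (fun v : basis n => v k) (L zv zv).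
by rewrite E !ffunE; case: (g zv k) => //=.
Qed.

Lemma lin_mat g : lin g -> forall y i,
  g y i = \big[addb/false]_(j < n) (y j && g (ev j) i).
Proof.
move=> L y i.
pose pre k := [ffun i : 'I_n => (i < k) && y i].
suff H : forall k, k <= n -> g (pre k) i =
   \big[addb/false]_(j < n | j < k) (y j && g (ev j) i).
  have Ey : y = pre n by apply/ffunP => j; rewrite ffunE ltn_ord.
  rewrite {1}Ey H ?leqnn //; apply: eq_bigl => j; by rewrite ltn_ord.
elim=> [|k IH] kn.
  have -> : pre 0 = zv by apply/ffunP => j; rewrite !ffunE.
  by rewrite lin0 // ffunE big_pred0.
pose kk := Ordinal kn.
have -> : pre k.+1 = xorv (pre k) (if y kk then ev kk else zv).
  apply/ffunP => j; rewrite !ffunE.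
  have -> : (if y kk then ev kk else zv) j = y kk && (j == kk).
    by case: (y kk); rewrite !ffunE.
  have jk : (j == kk) = (nat_of_ord j == k) by [].
  rewrite jk; case: (ltngtP j k) => H.
  - by rewrite ltnS (ltnW H) andbF addbF.
  - by rewrite ltnS leqNgt H andbF.
  - have Ej : j = kk by apply: val_inj.
    by rewrite {1}H ltnSn Ej /= andbT.
rewrite L ffunE IH ?(ltnW kn) // [RHS](bigD1 kk) /= ?ltnSn // addbC; congr addb.
  by case: (y kk); rewrite ?lin0 ?ffunE.
apply: eq_bigl => j; rewrite -(inj_eq val_inj) /=.
by apply/idP/idP; lia.
Qed.

End CnotSem.

Section Construction.
Variables (n r : nat).
Hypothesis nN : n <= 2 ^ r.
Local Notation N := (2 ^ r).
Local Notation Anc := ('I_n + (('I_N * 'I_n) + ('I_n * 'I_N)))%type.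
Local Notation QT := ('I_n + Anc)%type.

Lemma N_gt0 : 0 < N. Proof. by rewrite expn_gt0. Qed.
Definition o0 : 'I_N := Ordinal N_gt0.
Definition reg (b : bool) (j : 'I_n) : QT := if b then inr (inl j) else inl j.
Definition Ac (i : 'I_N) (j : 'I_n) : QT := inr (inr (inl (i, j))).
Definition Bc (i : 'I_n) (k : 'I_N) : QT := inr (inr (inr (i, k))).

Definition copyin (b : bool) : srcT QT := fun q =>
  match q with inr (inr (inl (i, j))) => if nat_of_ord i == 0 then Some (reg b j) else None
  | _ => None end.
Definition fan (t : nat) : srcT QT := fun q =>
  match q with inr (inr (inl (i, j))) =>
    if (2 ^ t <= i) && (i < 2 ^ t.+1) then omap (fun i' => Ac i' j) (insub (nat_of_ord i - 2 ^ t))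
    else None
  | _ => None end.
Definition mask (B : 'I_n -> 'I_n -> bool) : srcT QT := fun q =>
  match q with inr (inr (inr (i, k))) =>
    match (insub (nat_of_ord k) : option 'I_n) with
    | Some j => if B i j then Some (Ac (widen_ord nN i) j) else None
    | None => None end
  | _ => None end.
Definition fold (t : nat) : srcT QT := fun q =>
  match q with inr (inr (inr (i, k))) =>
    if 2 ^ t.+1 %| k then omap (fun k' => Bc i k') (insub (nat_of_ord k + 2 ^ t)) else None
  | _ => None end.
Definition copyout (b : bool) : srcT QT := fun q =>
  match q with
  | inl j => if b then Some (Bc j o0) else None
  | inr (inl j) => if b then None else Some (Bc j o0)
  | _ => None end.
Definition sw1 : srcT QT := fun q => match q with inr (inl j) => Some (inl j) | _ => None end.
Definition sw2 : srcT QT := fun q => match q with inl j => Some (inr (inl j)) | _ => None end.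

Definition Dd (b : bool) : pred QT := fun q =>
  match q with inl _ => b | inr (inl _) => ~~ b | _ => false end.

Lemma fan_some t q c : fan t q = Some c -> exists i j (i' : 'I_N),
  [/\ q = Ac i j, c = Ac i' j, 2 ^ t <= i, i < 2 ^ t.+1 & nat_of_ord i' = i - 2 ^ t].
Proof.
move: q => [j|[j|[[i j]|[i k]]]] //=; case: ifP => // /andP[h1 h2].
by case: insubP => //= i' _ Ei' [<-]; exists i, j, i'.
Qed.

Lemma fold_some t q c : fold t q = Some c -> exists i (k k' : 'I_N),
  [/\ q = Bc i k, c = Bc i k', 2 ^ t.+1 %| k & nat_of_ord k' = k + 2 ^ t].
Proof.
move: q => [j|[j|[[i j]|[i k]]]] //=; case: ifP => // h.
by case: insubP => //= k' _ Ek' [<-]; exists i, k, k'.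
Qed.

Lemma mask_some B q c : mask B q = Some c -> exists i k (j : 'I_n),
  [/\ q = Bc i k, c = Ac (widen_ord nN i) j, nat_of_ord k = j & B i j].
Proof.
move: q => [j|[j|[[i j]|[i k]]]] //=; case: insubP => //= j _ Ej.
by case: ifP => // Bij [<-]; exists i, k, j.
Qed.

Lemma copyin_some b q c : copyin b q = Some c -> exists i j,
  [/\ q = Ac i j, c = reg b j & nat_of_ord i = 0].
Proof.
move: q => [j|[j|[[i j]|[i k]]]] //=; case: ifP => // /eqP h [<-].
by exists i, j.
Qed.

Lemma copyout_some b q c : copyout b q = Some c -> exists j,
  q = reg (~~ b) j /\ c = Bc j o0.
Proof.
by case: b; move: q => [j|[j|[[i j]|[i k]]]] //= [<-]; exists j.
Qed.

Lemma p2gt0 t : 0 < 2 ^ t. Proof. by rewrite expn_gt0. Qed.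

Lemma good_fan t : good (fan t).
Proof.
split.
  move=> q c /fan_some [i [j [i' [-> -> h1 h2 Ei']]]]; split.
    rewrite /Ac /Bc; apply/eqP => -[E]; move: Ei'; rewrite E; have := p2gt0 t; lia.
  rewrite /= Ei'; case: ifP => // /andP[h _]; move: h; rewrite expnS in h2; lia.
move=> q1 q2 c /fan_some [i [j [i' [-> -> h1 h2 Ei']]]].
move=> /fan_some [i2 [j2 [i2' [-> [E1 E2] h1' h2' Ei2']]]].
rewrite E2; congr (Ac _ _); apply: ord_inj => /=.
move: Ei' Ei2'; rewrite E1; lia.
Qed.

Lemma dvd_step d k M : d %| k -> d %| M -> k < M -> k + d <= M.
Proof.
move=> /dvdnP [a ->] /dvdnP [b ->] h.
have d0 : 0 < d by case: d h => //; rewrite !muln0.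
rewrite ltn_pmul2r // in h; rewrite -mulSnr leq_pmul2r //.
Qed.

Lemma good_fold t : t < r -> good (fold t).
Proof.
move=> tr; split.
  move=> q c /fold_some [i [k [k' [-> -> h Ek']]]]; split.
    rewrite /Ac /Bc; apply/eqP => -[E]; move: Ek'; rewrite E; have := p2gt0 t; lia.
  rewrite /= Ek'; case: ifP => //; rewrite dvdn_addr // expnS.
  have := p2gt0 t; move=> p0 /dvdn_leq; rewrite p0 => /(_ isT); lia.
move=> q1 q2 c /fold_some [i [k [k' [-> -> h Ek']]]].
move=> /fold_some [i2 [k2 [k2' [-> [E1 E2] h' Ek2']]]].
rewrite E1; congr (Bc _ _); apply: ord_inj => /=.
move: Ek' Ek2'; rewrite E2; lia.
Qed.

Lemma good_mask B : good (mask B).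
Proof.
split.
  by move=> q c /mask_some [i [k [j [-> -> _ _]]]].
move=> q1 q2 c /mask_some [i [k [j [-> -> Ek _]]]].
move=> /mask_some [i2 [k2 [j2 [-> [E1 E2] Ek2 _]]]].
congr (Bc _ _); apply: ord_inj; first exact: E1.
by rewrite Ek Ek2 E2.
Qed.

Lemma good_copyin b : good (copyin b).
Proof.
split.
  by move=> q c /copyin_some [i [j [-> -> _]]]; case: b.
move=> q1 q2 c /copyin_some [i [j [-> -> Ei]]].
move=> /copyin_some [i2 [j2 [-> E Ei2]]].
have -> : i = i2 by apply: ord_inj; rewrite /= Ei Ei2.
by case: b E => -[->].
Qed.

Lemma good_copyout b : good (copyout b).
Proof.
split.
  by move=> q c /copyout_some [j [-> ->]]; case: b.
move=> q1 q2 c /copyout_some [j [-> ->]] /copyout_some [j2 [-> [->]]].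
by [].
Qed.

Lemma good_sw1 : good sw1.
Proof.
split; first by move=> [j|[j|[[i j]|[i k]]]] c //= [<-].
by move=> [j|[j|[[i j]|[i k]]]] [j2|[j2|[[i2 j2']|[i2 k2]]]] c //= [<-] [->].
Qed.
Lemma good_sw2 : good sw2.
Proof.
split; first by move=> [j|[j|[[i j]|[i k]]]] c //= [<-].
by move=> [j|[j|[[i j]|[i k]]]] [j2|[j2|[[i2 j2']|[i2 k2]]]] c //= [<-] [->].
Qed.

Lemma avoid_fan b t : avoids (Dd b) (fan t).
Proof. by move=> q c /fan_some [i [j [i' [-> -> _ _ _]]]]. Qed.
Lemma avoid_fold b t : avoids (Dd b) (fold t).
Proof. by move=> q c /fold_some [i [k [k' [-> -> _ _]]]]. Qed.
Lemma avoid_mask b B : avoids (Dd b) (mask B).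
Proof. by move=> q c /mask_some [i [k [j [-> -> _ _]]]]. Qed.
Lemma avoid_copyin b : avoids (Dd b) (copyin b).
Proof. by move=> q c /copyin_some [i [j [-> -> _]]]; case: b. Qed.


Lemma allS_map (T : eqType) (Q : finType) (P : srcT Q -> Prop) (f : T -> srcT Q) l :
  (forall t, t \in l -> P (f t)) -> allS P (map f l).
Proof.
elim: l => //= t l IH H; split; first by apply: H; rewrite inE eqxx.
by apply: IH => t' tl; apply: H; rewrite inE tl orbT.
Qed.

Definition Sseq b B := copyin b :: (map fan (iota 0 r) ++ mask B :: map fold (iota 0 r)).
Definition Pseq b B := Sseq b B ++ copyout b :: rev (Sseq b B).

Lemma good_S b B : allS (@good _) (Sseq b B).
Proof.
split; first exact: good_copyin.
apply: allS_cat; first by apply: allS_map => t _; apply: good_fan.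
split; first exact: good_mask.
by apply: allS_map => t; rewrite mem_iota add0n => /andP[_]; apply: good_fold.
Qed.

Lemma avoid_S b B : allS (avoids (Dd b)) (Sseq b B).
Proof.
split; first by move=> q c /copyin_some [i [j [-> -> _]]]; case: b; split.
apply: allS_cat; first by apply: allS_map => t _; apply: avoid_fan.
split; first exact: avoid_mask.
by apply: allS_map => t _; apply: avoid_fold.
Qed.

Lemma iotaS_rcons (T : Type) (f : nat -> T) t :
  map f (iota 0 t.+1) = rcons (map f (iota 0 t)) (f t).
Proof. by rewrite -addn1 iotaD map_cat /= add0n cats1. Qed.

Lemma runA b (y : {ffun QT -> bool}) : (forall i j, y (Ac i j) = false) ->
  forall t, t <= r ->
  run (copyin b :: map fan (iota 0 t)) y =
  [ffun q => match q with inr (inr (inl (i, j))) => (i < 2 ^ t) && y (reg b j)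
             | _ => y q end].
Proof.
move=> y0; elim=> [|t IH] tr.
  apply/ffunP => -[j|[j|[[i j]|[i k]]]]; rewrite !ffunE //=.
  have := y0 i j; rewrite /Ac => ->; rewrite ltnS leqn0.
  by case: (nat_of_ord i == 0).
rewrite iotaS_rcons -rcons_cons run_rcons IH ?(ltnW tr) //.
apply/ffunP => -[j|[j|[[i j]|[i k]]]]; rewrite !ffunE //=.
case: ifP => [/andP[h1 h2]|h].
  case: insubP => [i' _ Ei'|/negP []]; last first.
    by apply: leq_ltn_trans (leq_subr _ _) (ltn_ord i).
  have Ei2 : nat_of_ord i' = i - 2 ^ t := Ei'.
  rewrite /= /Ac ffunE.
  have -> : (i < 2 ^ t) = false by rewrite ltnNge h1.
  have -> : (i' < 2 ^ t) = true by apply/idP; move: h2; rewrite expnS; lia.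
  by rewrite h2.
have -> // : (i < 2 ^ t) = (i < 2 ^ t.+1).
by move: h; rewrite expnS; have := p2gt0 t; lia.
Qed.

Definition notB (q : QT) := match q with inr (inr (inr _)) => false | _ => true end.

Lemma runF (w : {ffun QT -> bool}) t : t <= r ->
  (forall q, notB q -> run (map fold (iota 0 t)) w q = w q) /\
  (forall i (k : 'I_N), 2 ^ t %| k -> run (map fold (iota 0 t)) w (Bc i k) =
     \big[addb/false]_(k <= l < k + 2 ^ t)
        (if (insub l : option 'I_N) is Some l' then w (Bc i l') else false)).
Proof.
elim: t => [|t IH] tr; last have [IH1 IH2] := IH (ltnW tr).
  split => // i k _; rewrite addn1 big_nat1.
  by have -> : (insub (nat_of_ord k) : option 'I_N) = Some k := valK k.
rewrite iotaS_rcons run_rcons; split.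
  move=> q nq; rewrite ffunE; move: q nq => -[j|[j|[[i j]|[i k]]]] //= _; exact: IH1.
move=> i k h; rewrite ffunE /= h.
case: insubP => [k' _ Ek'|/negP []]; last first.
  have := dvd_step h (dvdn_exp2l 2 tr) (ltn_ord k).
  rewrite expnS; have := p2gt0 t; lia.
have Ek2 : nat_of_ord k' = k + 2 ^ t := Ek'.
have hk : 2 ^ t %| k by apply: dvdn_trans h; apply: dvdn_exp2l.
rewrite /= IH2 // IH2; last by rewrite Ek2 dvdn_addr.
rewrite Ek2 [RHS](@big_cat_nat _ _ _ (k + 2 ^ t)) ?leq_addr //; last first.
  by rewrite leq_add2l leq_exp2l.
by rewrite expnS mul2n -addnn addnA.
Qed.

Lemma sum_conv (F : 'I_n -> bool) :
  \big[addb/false]_(0 <= l < 0 + N)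
     (if (insub l : option 'I_N) is Some l' then
        (if (insub (nat_of_ord l') : option 'I_n) is Some j then F j else false)
      else false) = \big[addb/false]_(j < n) F j.
Proof.
pose F' l := if (insub l : option 'I_n) is Some j then F j else false.
rewrite add0n (eq_big_nat _ _ (F2 := F')); last first.
  move=> l /andP[_ lN]; rewrite /F'; case: insubP => [l' _ El'|/negP[]] //.
  by rewrite El'.
rewrite (@big_cat_nat _ _ _ n 0 N) ?leq0n //=.
rewrite [X in addb _ X]big1_seq ?addbF; last first.
  move=> l; rewrite mem_iota subnKC // => /and3P[_ nl _].
  by rewrite /F' insubN // -leqNgt.
rewrite big_mkord; apply: eq_bigr => j _; rewrite /F'.
by have -> : (insub (nat_of_ord j) : option 'I_n) = Some j := valK j.
Qed.

Lemma runS b B (y : {ffun QT -> bool}) :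
  (forall i j, y (Ac i j) = false) -> (forall i k, y (Bc i k) = false) ->
  forall i, run (Sseq b B) y (Bc i o0) = \big[addb/false]_(j < n) (B i j && y (reg b j)).
Proof.
move=> yA yB i.
rewrite /Sseq -cat_cons run_cat runA // run_cons.
have [_ H] := runF (step (mask B) [ffun q => match q with
  | inr (inr (inl (i0, j))) => (i0 < 2 ^ r) && y (reg b j) | _ => y q end]) (leqnn r).
rewrite H ?dvdn0 // -(sum_conv (fun j => B i j && y (reg b j))).
apply: eq_big_nat => l _; case: (insub l) => [l'|] //.
rewrite ffunE /= ffunE /=; have := yB i l'; rewrite /Bc => ->.
case: insubP => [j _ Ej|] //=; case: (B i j) => //=.
by rewrite /Ac ffunE ltn_ord.
Qed.

Lemma copyout_D b t c : copyout b t = Some c -> Dd b t.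
Proof. by move=> /copyout_some [j [-> _]]; case: b. Qed.

Lemma runP b B (y : {ffun QT -> bool}) :
  (forall i j, y (Ac i j) = false) -> (forall i k, y (Bc i k) = false) ->
  (forall q, ~~ Dd b q -> run (Pseq b B) y q = y q) /\
  (forall i, run (Pseq b B) y (reg (~~ b) i) =
     y (reg (~~ b) i) (+) \big[addb/false]_(j < n) (B i j && y (reg b j))).
Proof.
move=> yA yB; split.
  move=> q Dq; rewrite /Pseq (@P_spec _ (Dd b)) ?(negbTE Dq) //;
    [exact: good_S|exact: avoid_S|exact: copyout_D].
move=> i; rewrite /Pseq (@P_spec _ (Dd b)); last exact: copyout_D;
  [|exact: good_S|exact: avoid_S].
have Di : Dd b (reg (~~ b) i) by case: b.
rewrite Di ffunE.
have -> : copyout b (reg (~~ b) i) = Some (Bc i o0) by clear Di; case: b.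
by rewrite (run_avoidsD _ (avoid_S b B) Di) runS.
Qed.

Definition Full A A' := Pseq false A ++ Pseq true A' ++ [:: sw1; sw2; sw1].
Definition joinQ (w : basis n) : {ffun QT -> bool} :=
  [ffun q => if q is inl j then w j else false].

Lemma size_Full A A' : size (Full A A') = 8 * r + 13.
Proof.
rewrite /Full /Pseq /Sseq !size_cat /= !size_rev /= !size_cat /= !size_map size_iota.
lia.
Qed.

Lemma step_val (s : srcT QT) (y : {ffun QT -> bool}) q :
  step s y q = if s q is Some c then y q (+) y c else y q.
Proof. by rewrite ffunE. Qed.

Lemma Full_spec (f g : basis n -> basis n) w : lin f -> lin g -> cancel f g ->
  run (Full (fun i j => f (ev j) i) (fun i j => g (ev j) i)) (joinQ w) = joinQ (f w).
Proof.
move=> Lf Lg fK.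
set A := (fun i j => f (ev j) i); set A' := (fun i j => g (ev j) i).
set y0 := joinQ w.
have y0A i j : y0 (Ac i j) = false by rewrite ffunE.
have y0B i k : y0 (Bc i k) = false by rewrite ffunE.
have [H1a H1b] := runP false A y0A y0B.
set y1 := run (Pseq false A) y0.
have y1A i j : y1 (Ac i j) = false by rewrite H1a.
have y1B i k : y1 (Bc i k) = false by rewrite H1a.
have y1M j : y1 (inl j) = w j by rewrite H1a // ffunE.
have y1O i : y1 (inr (inl i)) = f w i.
  have := H1b i; rewrite /= => ->; rewrite ffunE /= (lin_mat Lf w i).
  by apply: eq_bigr => j _; rewrite ffunE andbC.
have [H2a H2b] := runP true A' y1A y1B.
set y2 := run (Pseq true A') y1.
have y2M j : y2 (inl j) = false.
  have := H2b j; rewrite /= => ->; rewrite y1M.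
  have -> : \big[addb/false]_(j0 < n) (A' j j0 && y1 (reg true j0)) = g (f w) j.
    by rewrite (lin_mat Lg (f w) j); apply: eq_bigr => k _; rewrite /= y1O andbC.
  by rewrite fK addbb.
have y2O j : y2 (inr (inl j)) = f w j by rewrite H2a // y1O.
have y2R a : y2 (inr (inr a)) = false.
  rewrite H2a //; move: a => [[i j]|[i k]]; [exact: y1A|exact: y1B].
have -> : run (Full A A') y0 = step sw1 (step sw2 (step sw1 y2)).
  by rewrite /Full /y2 /y1 {1}/run foldl_cat foldl_cat.
have z1M j : step sw1 y2 (inl j) = false by rewrite step_val /= y2M.
have z1O j : step sw1 y2 (inr (inl j)) = f w j by rewrite step_val /= y2O y2M addbF.
have z1R a : step sw1 y2 (inr (inr a)) = false by rewrite step_val /= y2R.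
have z2M j : step sw2 (step sw1 y2) (inl j) = f w j by rewrite step_val /= z1M z1O.
have z2O j : step sw2 (step sw1 y2) (inr (inl j)) = f w j by rewrite step_val /= z1O.
have z2R a : step sw2 (step sw1 y2) (inr (inr a)) = false by rewrite step_val /= z1R.
apply/ffunP => -[j|[j|a]].
- by rewrite step_val /= z2M ffunE.
- by rewrite step_val /= z2O z2M addbb ffunE.
- by rewrite step_val /= z2R ffunE.
Qed.

End Construction.

Lemma allS_mapf (Q Q' : finType) (P : srcT Q -> Prop) (P' : srcT Q' -> Prop)
  (f : srcT Q -> srcT Q') ss :
  (forall s, P s -> P' (f s)) -> allS P ss -> allS P' (map f ss).
Proof. by move=> H; elim: ss => //= s ss IH [Ps A]; split; [apply: H|apply: IH]. Qed.

Section Transport.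
Variables (n r : nat).
Local Notation N := (2 ^ r).
Local Notation Anc := ('I_n + (('I_N * 'I_n) + ('I_n * 'I_N)))%type.
Local Notation QT := ('I_n + Anc)%type.
Local Notation m := #|{: Anc}|.

Definition enc (q : QT) : 'I_(n + m) :=
  match q with inl j => lshift m j | inr a => rshift n (enum_rank a) end.
Definition dec (k : 'I_(n + m)) : QT :=
  match split k with inl j => inl j | inr a => inr (enum_val a) end.

Lemma encK : cancel dec enc.
Proof.
move=> k; rewrite /dec -{2}(splitK k); case: (split k) => j //=.
by rewrite enum_valK.
Qed.
Lemma decK : cancel enc dec.
Proof. by move=> [j|a]; rewrite /dec /= ?split_l ?split_r ?enum_rankK. Qed.

Definition trs (s : srcT QT) : srcT 'I_(n + m) := fun k => omap enc (s (dec k)).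
Definition TT (y : {ffun 'I_(n + m) -> bool}) : {ffun QT -> bool} := [ffun q => y (enc q)].

Lemma TT_step s y : TT (step (trs s) y) = step s (TT y).
Proof.
apply/ffunP => q; rewrite !ffunE /trs decK.
by case: (s q) => [c|] /=; rewrite ?ffunE.
Qed.

Lemma TT_run ss y : TT (run (map trs ss) y) = run ss (TT y).
Proof. by elim: ss y => //= s ss IH y; rewrite IH TT_step. Qed.

Lemma TT_inj : injective TT.
Proof.
move=> y1 y2 E; apply/ffunP => k; rewrite -(encK k).
by have := congr1 (fun y : {ffun QT -> bool} => y (dec k)) E; rewrite !ffunE.
Qed.

Lemma good_trs s : good s -> good (trs s).
Proof.
move=> [V I]; split.
  move=> t c'; rewrite /trs; case E: (s (dec t)) => [c|] //= [<-].
  have [cd sc] := V _ _ E; split.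
    by apply: contraNneq cd => <-; rewrite decK.
  by rewrite decK sc.
move=> t1 t2 c'; rewrite /trs.
case E1: (s (dec t1)) => [c1|] //= [<-]; case E2: (s (dec t2)) => [c2|] //= [E].
have Ec : c2 = c1 by rewrite -(decK c1) -E decK.
have E2' : s (dec t2) = Some c1 by rewrite E2 Ec.
by rewrite -(encK t1) -(encK t2) (I _ _ _ E1 E2').
Qed.

Lemma TT_join w : TT (joinK m w) = joinQ r w.
Proof. by apply/ffunP => -[j|a]; rewrite !ffunE /= ?split_l ?split_r. Qed.

Lemma card_Anc : m = n + 2 * (N * n).
Proof. rewrite !card_sum !card_prod !card_ord; lia. Qed.

Lemma main_n (C : numClosedFieldType) (nN : n <= N) (s : cnot_circuit n) :
  cnot_wf s -> exists ls : circuit C (n + m),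
    [/\ circuit_wf ls, size ls = 8 * r + 13 &
        embeds (cnot_circuit_op C s) (circuit_op ls)].
Proof.
move=> ws.
have [g fg gf] := injF_bij (fc_inj ws).
have Lf := fc_lin s.
have Lg : lin g.
  by move=> a b; apply: (can_inj fg); rewrite Lf !gf.
set ss := Full nN (fun i j => fc s (ev j) i) (fun i j => g (ev j) i).
have Gss : allS (@good _) ss.
  rewrite /ss /Full /Pseq.
  have GS := fun b B => good_S nN b B.
  have GP : forall b B, allS (@good _) (Sseq nN b B ++ @copyout n r b :: rev (Sseq nN b B)).
    move=> b B; apply: allS_cat; first exact: GS.
    by split; [exact: good_copyout | apply: allS_rev; exact: GS].
  apply: allS_cat; first exact: GP.
  apply: allS_cat; first exact: GP.
  by split; [exact: good_sw1| split; [exact: good_sw2| split; [exact: good_sw1|]]].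
have Gt : allS (@good _) (map trs ss) by apply: allS_mapf Gss => s0; apply: good_trs.
exists (map (@mklayer C _) (map trs ss)); split.
- exact: circuit_wf_mk.
- by rewrite !size_map size_Full.
have -> : cnot_circuit_op C s = permop C (fc s).
  by do 2 (apply: functional_extensionality => ?); rewrite cnot_op_perm.
have -> : circuit_op (map (@mklayer C _) (map trs ss)) = permop C (run (map trs ss)).
  by do 2 (apply: functional_extensionality => ?); rewrite circuit_mk.
apply: embeds_perm => w; apply: TT_inj.
by rewrite TT_run !TT_join /ss Full_spec.
Qed.

End Transport.
Unset Implicit Arguments.

Theorem proposition6 (C : numClosedFieldType) :
  (exists c1 c2 : nat, forall (n : nat) (s : cnot_circuit n),
     (0 < n)%N -> cnot_wf s ->
     exists m : nat, (m <= c2 * n ^ 2)%N /\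
       exists ls : circuit C (n + m),
         circuit_wf ls /\ (size ls <= c1 * trunc_log 2 n)%N /\
         embeds (cnot_circuit_op C s) (circuit_op ls))
  /\
  (forall Cf : forall n : nat, cnot_circuit n,
     (forall n, (0 < n)%N -> cnot_wf (Cf n)) ->
     in_QNC1 (fun n => cnot_circuit_op C (Cf n))).
Proof.
have part1 : exists c1 c2 : nat, forall (n : nat) (s : cnot_circuit n),
     (0 < n)%N -> cnot_wf s ->
     exists m : nat, (m <= c2 * n ^ 2)%N /\
       exists ls : circuit C (n + m),
         circuit_wf ls /\ (size ls <= c1 * trunc_log 2 n)%N /\
         embeds (cnot_circuit_op C s) (circuit_op ls).
  exists 29, 5 => n s n0 ws.
  case: (ltngtP n 1) => [n1|n1|n1].
  - by move: n0 n1; lia.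
  - set r := (trunc_log 2 n).+1.
    have nN : (n <= 2 ^ r)%N := ltnW (trunc_log_ltn n (isT : 1 < 2)).
    have [ls [wf sz em]] := main_n C nN ws.
    have /andP[h1 _] := trunc_log_bounds (isT : 1 < 2) n0.
    have tl0 : (0 < trunc_log 2 n)%N by rewrite trunc_log_gt0.
    exists #|{: ('I_n + (('I_(2 ^ r) * 'I_n) + ('I_n * 'I_(2 ^ r))))%type}|; split.
      rewrite card_Anc /r expnS.
      move: h1; set x := 2 ^ trunc_log 2 n; move=> h1.
      rewrite expnS expn1; nia.
    exists ls; split => //; split => //.
    by rewrite sz /r; lia.
  - subst n.
    have -> : s = [::].
      by case: s ws => [|[c t] s] //=; rewrite (ord1 c) (ord1 t) eqxx.
    exists 0; split => //; exists [::]; split => //; split => //.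
    exact: (@embeds_perm C 1 0 id id (fun w => erefl)).
split; first exact: part1.
move=> Cf wf; split.
  move=> n n0.
  have -> : cnot_circuit_op C (Cf n) = permop C (fc (Cf n)).
    by do 2 (apply: functional_extensionality => ?); rewrite cnot_op_perm.
  apply: permop_unitary; apply: injF_bij; exact: fc_inj (wf n n0).
have [c1 [c2 H]] := part1.
exists c1, c2, 2 => n n0.
exact: H n (Cf n) n0 (wf n n0).
Qed.
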